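(* Let $X$ be any one of the sequences $F,L,J,j,P,Q$. For integers $a,b,c,d,e$ put $$\Delta=X_{d-a}X_{e-b}-X_{e-a}X_{d-b},\quad \Delta_1=X_{d-c}X_{e-b}-X_{e-c}X_{d-b},\quad \Delta_2=X_{d-a}X_{e-c}-X_{e-a}X_{d-c}.$$ Then for every nonnegative integer $k$ and every integer $m$: if $\Delta_2\neq0$, $$\sum_{r=0}^k\binom kr\left(\frac{\Delta_1}{\Delta_2}\right)^rX_{m-(b-c)k+(b-a)r}=\left(\frac{\Delta}{\Delta_2}\right)^kX_m\quad\text{and}\quad \sum_{r=0}^k\binom kr\left(\frac{-\Delta}{\Delta_2}\right)^rX_{m+(a-b)k+(b-c)r}=\left(\frac{\Delta_1}{-\Delta_2}\right)^kX_m;$$ and if $\Delta_1\neq0$, $$\sum_{r=0}^k\binom kr\left(\frac{-\Delta}{\Delta_1}\right)^rX_{m+(b-a)k+(a-c)r}=\left(\frac{\Delta_2}{-\Delta_1}\right)^kX_m.$$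
   Context: All sequences are indexed by $n\in\mathbb Z$. Fibonacci numbers $F_n$ and Lucas numbers $L_n$: $F_n=F_{n-1}+F_{n-2}$, $L_n=L_{n-1}+L_{n-2}$ for all $n\in\mathbb Z$, with $F_0=0,F_1=1,L_0=2,L_1=1$ (so $F_{-n}=(-1)^{n-1}F_n$, $L_{-n}=(-1)^nL_n$). Jacobsthal numbers $J_n$ and Jacobsthal–Lucas numbers $j_n$: $J_n=J_{n-1}+2J_{n-2}$, $j_n=j_{n-1}+2j_{n-2}$ for all $n\in\mathbb Z$, with $J_0=0,J_1=1,j_0=2,j_1=1$ (so $J_{-n}=(-1)^{n-1}2^{-n}J_n$, $j_{-n}=(-1)^n2^{-n}j_n$, rational for negative index). Pell numbers $P_n$ and Pell–Lucas numbers $Q_n$: $P_n=2P_{n-1}+P_{n-2}$, $Q_n=2Q_{n-1}+Q_{n-2}$ for all $n\in\mathbb Z$, with $P_0=0,P_1=1,Q_0=2,Q_1=2$ (so $P_{-n}=(-1)^{n-1}P_n$, $Q_{-n}=(-1)^nQ_n$). Here $0^0=1$. *)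

(* Defs.v *)
From HB Require Import structures.
From mathcomp Require Import all_boot all_order all_algebra.
Set Implicit Arguments. Unset Strict Implicit. Unset Printing Implicit Defensive.
Import Order.TTheory GRing.Theory Num.Theory.
Local Open Scope ring_scope.

(* Two-sided sequence W with W_n = p W_{n-1} + q W_{n-2} for all n in Z,
   W_0 = w0, W_1 = w1 (q <> 0 for the instances below). *)
Fixpoint fwd (p q w0 w1 : rat) (n : nat) : rat * rat :=
  match n with
  | 0%N => (w0, w1)
  | n'.+1 => let (x, y) := fwd p q w0 w1 n' in (y, p * y + q * x)
  end.
(* bwd n = (W_{-n}, W_{-n+1}) *)
Fixpoint bwd (p q w0 w1 : rat) (n : nat) : rat * rat :=
  match n with
  | 0%N => (w0, w1)
  | n'.+1 => let (x, y) := bwd p q w0 w1 n' in ((y - p * x) / q, x)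
  end.
Definition W (p q w0 w1 : rat) (n : int) : rat :=
  match n with
  | Posz k => (fwd p q w0 w1 k).1
  | Negz k => (bwd p q w0 w1 k.+1).1   (* Negz k = -(k+1) *)
  end.

Definition Fib   : int -> rat := W 1 1 0 1.
Definition Luc   : int -> rat := W 1 1 2 1.
Definition Jac   : int -> rat := W 1 2 0 1.
Definition JacL  : int -> rat := W 1 2 2 1.
Definition Pell  : int -> rat := W 2 1 0 1.
Definition PellL : int -> rat := W 2 1 2 2.

Inductive seqname := sF | sL | sJ | sj | sP | sQ.
Definition Xseq (s : seqname) : int -> rat :=
  match s with
  | sF => Fib | sL => Luc | sJ => Jac | sj => JacL | sP => Pell | sQ => PellL
  end.

(* Main.v *)
Require Import Defs.
From HB Require Import structures.
From mathcomp Require Import all_boot all_order all_algebra.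
From mathcomp Require Import zify ring.
Import Order.TTheory GRing.Theory Num.Theory.
Local Open Scope ring_scope.

Definition isrec (p q : rat) (X : int -> rat) := forall n, X (n + 2) = p * X (n + 1) + q * X n.

Lemma fwd_S2 p q w0 w1 n : (fwd p q w0 w1 n.+1).1 = (fwd p q w0 w1 n).2.
Proof. by rewrite /=; case: (fwd p q w0 w1 n). Qed.
Lemma fwd_S3 p q w0 w1 n : (fwd p q w0 w1 n.+1).2 = p * (fwd p q w0 w1 n).2 + q * (fwd p q w0 w1 n).1.
Proof. by rewrite /=; case: (fwd p q w0 w1 n). Qed.
Lemma bwd_S1 p q w0 w1 n : (bwd p q w0 w1 n.+1).1 = ((bwd p q w0 w1 n).2 - p * (bwd p q w0 w1 n).1) / q.
Proof. by rewrite /=; case: (bwd p q w0 w1 n). Qed.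
Lemma bwd_S2 p q w0 w1 n : (bwd p q w0 w1 n.+1).2 = (bwd p q w0 w1 n).1.
Proof. by rewrite /=; case: (bwd p q w0 w1 n). Qed.

Lemma Wneg p q w0 w1 (n : nat) : W p q w0 w1 (- n%:Z) = (bwd p q w0 w1 n).1.
Proof. case: n => [|n]; first by rewrite oppr0. by rewrite -NegzE. Qed.

Lemma W_rec p q w0 w1 : q != 0 -> isrec p q (W p q w0 w1).
Proof.
move=> q0 [k|k].
- have -> : Posz k + 2 = Posz k.+2 by lia.
  have -> : Posz k + 1 = Posz k.+1 by lia.
  rewrite /W fwd_S2 fwd_S3 fwd_S2. done.
- rewrite NegzE; case: k => [|j].
  + have -> : - (Posz 1) + 2 = Posz 1 by lia.
    have -> : - (Posz 1) + 1 = Posz 0 by lia.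
    rewrite (Wneg _ _ _ _ 1) /= . field. done.
  + have -> : - (Posz j.+2) + 2 = - Posz j by lia.
    have -> : - (Posz j.+2) + 1 = - Posz j.+1 by lia.
    rewrite !Wneg. rewrite [(bwd _ _ _ _ j.+2).1]bwd_S1 bwd_S2. field. done.
Qed.

Lemma rec_uniq p q Y Z : q != 0 -> isrec p q Y -> isrec p q Z ->
  Y 0 = Z 0 -> Y 1 = Z 1 -> forall n, Y n = Z n.
Proof.
move=> q0 HY HZ h0 h1.
have fw : forall k : nat, Y k = Z k /\ Y (k.+1) = Z (k.+1).
  elim=> [|k [IH1 IH2]]; first by split.
  split=> //.
  have -> : Posz k.+2 = Posz k + 2 by lia.
  have E : Posz k.+1 = Posz k + 1 by lia.
  by rewrite HY HZ -E IH1 IH2.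
have bw : forall k : nat, Y (- k%:Z) = Z (- k%:Z) /\ Y (- k%:Z + 1) = Z (- k%:Z + 1).
  elim=> [|k [IH1 IH2]]; first by rewrite oppr0 add0r; split.
  split; last by have -> : - Posz k.+1 + 1 = - Posz k by lia.
  have HY' := HY (- Posz k.+1); have HZ' := HZ (- Posz k.+1).
  have E1 : - Posz k.+1 + 2 = - Posz k + 1 by lia.
  have E2 : - Posz k.+1 + 1 = - Posz k by lia.
  rewrite E1 E2 in HY' HZ'.
  apply: (mulfI q0).
  apply: (addrI (p * Y (- Posz k))).
  by rewrite -HY' IH1 IH2 HZ'.
move=> [k|k]; first by case: (fw k).
by rewrite NegzE; case: (bw k.+1).
Qed.

Lemma decomp p q X : q != 0 -> isrec p q X -> forall t n,
  X (n - t) = X (- t) * W p q 1 0 n + X (1 - t) * W p q 0 1 n.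
Proof.
move=> q0 HX t.
apply: (@rec_uniq p q (fun n => X (n - t)) (fun n => X (- t) * W p q 1 0 n + X (1 - t) * W p q 0 1 n) q0).
- move=> n. have -> : n + 2 - t = (n - t) + 2 by lia.
  have -> : n + 1 - t = (n - t) + 1 by lia. exact: HX.
- move=> n. rewrite !W_rec //. ring.
- rewrite sub0r /W /=. ring.
- rewrite /W /=. ring.
Qed.

Lemma three p q X (a b c d e N : int) : q != 0 -> isrec p q X ->
  (X (d - a) * X (e - b) - X (e - a) * X (d - b)) * X (N - c) =
  (X (d - c) * X (e - b) - X (e - c) * X (d - b)) * X (N - a) +
  (X (d - a) * X (e - c) - X (e - a) * X (d - c)) * X (N - b).
Proof.
move=> q0 HX.
rewrite !(@decomp p q X q0 HX _ d) !(@decomp p q X q0 HX _ e) !(@decomp p q X q0 HX _ N).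
ring.
Qed.

Lemma binsum (Y : int -> rat) (A B : rat) (u v : int) :
  (forall n, A * Y (n + u) = Y n + B * Y (n + v)) ->
  forall k n, \sum_(r < k.+1) ('C(k, r))%:R * B ^+ r * Y (n + v * r%:Z)
             = A ^+ k * Y (n + u * k%:Z).
Proof.
move=> H; elim=> [|k IH] n.
  by rewrite big_ord_recl big_ord0 /= !mulr0 !addr0 expr0 bin0 !mul1r.
rewrite big_ord_recl.
have S : \sum_(i < k.+1) ('C(k.+1, lift ord0 i))%:R * B ^+ (lift ord0 i) * Y (n + v * (lift ord0 i : nat)%:Z)
  = \sum_(i < k.+1) ('C(k, i.+1))%:R * B ^+ i.+1 * Y (n + v * (i.+1)%:Z)
  + \sum_(i < k.+1) ('C(k, i))%:R * B ^+ i.+1 * Y (n + v * (i.+1)%:Z).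
  rewrite -big_split; apply: eq_bigr => i _.
  have -> : (lift ord0 i : nat) = i.+1 by [].
  by rewrite binS natrD !mulrDl.
rewrite S.
have E1 : \sum_(i < k.+1) ('C(k, i))%:R * B ^+ i.+1 * Y (n + v * (i.+1)%:Z)
   = B * (A ^+ k * Y (n + v + u * k%:Z)).
  rewrite -IH big_distrr /=; apply: eq_bigr => i _.
  have -> : n + v * (i.+1)%:Z = n + v + v * i%:Z by rewrite intS; ring.
  rewrite exprS; ring.
have E2 : ('C(k.+1, @ord0 k.+1))%:R * B ^+ (@ord0 k.+1) * Y (n + v * (@ord0 k.+1 : nat)%:Z) +
   \sum_(i < k.+1) ('C(k, i.+1))%:R * B ^+ i.+1 * Y (n + v * (i.+1)%:Z) = A ^+ k * Y (n + u * k%:Z).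
  rewrite -IH [in RHS]big_ord_recl big_ord_recr /= (bin_small (ltnSn k)) !bin0 mul0r mul0r addr0.
  by [].
rewrite addrA E2 E1.
have := H (n + u * k%:Z).
have -> : n + u * k%:Z + u = n + u * (k.+1)%:Z by rewrite intS; ring.
have -> : n + u * k%:Z + v = n + v + u * k%:Z by ring.
move=> HH. rewrite exprSr -mulrA HH; ring.
Qed.

Lemma main_gen (X : int -> rat) (a b c : int) (D D1 D2 : rat)
  (T : forall N, D * X (N - c) = D1 * X (N - a) + D2 * X (N - b)) (k : nat) (m : int) :
  (D2 != 0 ->
     (\sum_(r < k.+1) ('C(k, r))%:R * (D1 / D2) ^+ r
          * X (m - (b - c) * k%:Z + (b - a) * r%:Z)
        = (D / D2) ^+ k * X m)
  /\ (\sum_(r < k.+1) ('C(k, r))%:R * (- D / D2) ^+ r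
          * X (m + (a - b) * k%:Z + (b - c) * r%:Z)
        = (D1 / (- D2)) ^+ k * X m))
  /\
  (D1 != 0 ->
     \sum_(r < k.+1) ('C(k, r))%:R * (- D / D1) ^+ r
          * X (m + (b - a) * k%:Z + (a - c) * r%:Z)
        = (D2 / (- D1)) ^+ k * X m).
Proof.
split; [move=> nz; split | move=> nz].
- have H : forall n, D / D2 * X (n + (b - c)) = X n + D1 / D2 * X (n + (b - a)).
    move=> n; have := T (n + b).
    have -> : n + b - c = n + (b - c) by ring.
    have -> : n + b - a = n + (b - a) by ring.
    have -> : n + b - b = n by ring.
    move=> h. have -> : X n = (D * X (n + (b - c)) - D1 * X (n + (b - a))) / D2.
      by rewrite h; field.
    by field.
  rewrite (@binsum X _ _ _ _ H k (m - (b - c) * k%:Z)).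
  by have -> : m - (b - c) * k%:Z + (b - c) * k%:Z = m by ring.
- have H : forall n, D1 / (- D2) * X (n + (b - a)) = X n + - D / D2 * X (n + (b - c)).
    move=> n; have := T (n + b).
    have -> : n + b - c = n + (b - c) by ring.
    have -> : n + b - a = n + (b - a) by ring.
    have -> : n + b - b = n by ring.
    move=> h. have -> : X n = (D * X (n + (b - c)) - D1 * X (n + (b - a))) / D2.
      by rewrite h; field.
    by field.
  rewrite (@binsum X _ _ _ _ H k (m + (a - b) * k%:Z)).
  by have -> : m + (a - b) * k%:Z + (b - a) * k%:Z = m by ring.
- have H : forall n, D2 / (- D1) * X (n + (a - b)) = X n + - D / D1 * X (n + (a - c)).
    move=> n; have := T (n + a).
    have -> : n + a - c = n + (a - c) by ring.
    have -> : n + a - b = n + (a - b) by ring.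
    have -> : n + a - a = n by ring.
    move=> h. have -> : X n = (D * X (n + (a - c)) - D2 * X (n + (a - b))) / D1.
      by rewrite h; field.
    by field.
  rewrite (@binsum X _ _ _ _ H k (m + (b - a) * k%:Z)).
  by have -> : m + (b - a) * k%:Z + (a - b) * k%:Z = m by ring.
Qed.

Theorem theorem6 (s : seqname) (a b c d e : int) (k : nat) (m : int) :
  let X := Xseq s in
  let D  := X (d - a) * X (e - b) - X (e - a) * X (d - b) in
  let D1 := X (d - c) * X (e - b) - X (e - c) * X (d - b) in
  let D2 := X (d - a) * X (e - c) - X (e - a) * X (d - c) in
  (D2 != 0 ->
     (\sum_(r < k.+1) ('C(k, r))%:R * (D1 / D2) ^+ r
          * X (m - (b - c) * k%:Z + (b - a) * r%:Z)
        = (D / D2) ^+ k * X m)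
  /\ (\sum_(r < k.+1) ('C(k, r))%:R * (- D / D2) ^+ r
          * X (m + (a - b) * k%:Z + (b - c) * r%:Z)
        = (D1 / (- D2)) ^+ k * X m))
  /\
  (D1 != 0 ->
     \sum_(r < k.+1) ('C(k, r))%:R * (- D / D1) ^+ r
          * X (m + (b - a) * k%:Z + (a - c) * r%:Z)
        = (D2 / (- D1)) ^+ k * X m).
Proof.
move=> X D D1 D2; apply: main_gen => N.
have [p [q [q0 HX]]] : exists p q, q != 0 /\ isrec p q X.
  clear D D1 D2; rewrite /X; clear X; case: s.
  - by exists 1, 1; split=> //; apply: W_rec.
  - by exists 1, 1; split=> //; apply: W_rec.
  - by exists 1, 2; split=> //; apply: W_rec.
  - by exists 1, 2; split=> //; apply: W_rec.
  - by exists 2, 1; split=> //; apply: W_rec.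
  - by exists 2, 1; split=> //; apply: W_rec.
exact: (@three p q X a b c d e N q0 HX).
Qed.
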